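(* Let $\Delta t>0$, $L>0$, $M\ge0$, $\alpha=\Delta t\big[1+\frac{L\Delta t}{2}+\frac{(L\Delta t)^2}{6}+\frac{(L\Delta t)^3}{24}\big]$, and let $\Phi:\mathbb{R}^n\to\mathbb{R}^n$ be the one-step Runge–Kutta state-transition map, assumed to satisfy $\|\Phi(x)-\Phi(y)\|\le(1+L\alpha)\|x-y\|+\alpha M$ for all $x,y$. Let $N$ be a positive integer, $T=N\Delta t$, $\phi_N$ the $N$-fold composition of $\Phi$, $a=(1+L\alpha)^N$ and $b=\sum_{r=0}^{N-1}(1+L\alpha)^r\alpha M$. Let $r_0>0$, $k\ge1$, $\lambda>0$, $\mathbb{D}_0=\{x:\|x\|\le r_0\}$, and assume $\|\phi_N(x_0)\|\le k\|x_0\|e^{-\lambda T}$ for all $x_0\in\mathbb{D}_0$. Then for all $x,y\in\mathbb{D}_0$, $$\|\phi_N(x)-\phi_N(y)\|\le\sqrt{2kr_0e^{-\lambda T}a\|x-y\|+2kr_0e^{-\lambda T}b}.$$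
   Context: $\Phi$ is the classical RK4 map $\Phi(x)=x+\frac{\Delta t}{6}(k_1+2k_2+2k_3+k_4)$, $k_1=f(x)$, $k_2=f(x+k_1\Delta t/2)$, $k_3=f(x+k_2\Delta t/2)$, $k_4=f(x+k_3\Delta t)$, for an autonomous system $\dot x=f(x)$ with equilibrium at the origin which is exponentially stable on $\mathbb{D}_0$ with constants $k,\lambda$; $\phi_N(x_0)$ is the simulated state after time $T$ starting at $x_0$. *)

(* Defs.v *)
From mathcomp Require Import all_boot all_order all_algebra.
From mathcomp Require Import all_classical all_reals all_analysis.
Set Implicit Arguments. Unset Strict Implicit. Unset Printing Implicit Defensive.
Import Order.TTheory GRing.Theory Num.Theory.
Local Open Scope ring_scope.

Definition enorm {R : realType} {n : nat} (v : 'rV[R]_n) : R :=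
  Num.sqrt (\sum_(i < n) (v ord0 i) ^+ 2).

Definition rk4 {R : realType} {n : nat} (f : 'rV[R]_n -> 'rV[R]_n) (dt : R)
  (x : 'rV[R]_n) : 'rV[R]_n :=
  let k1 := f x in
  let k2 := f (x + (dt / 2) *: k1) in
  let k3 := f (x + (dt / 2) *: k2) in
  let k4 := f (x + dt *: k3) in
  x + (dt / 6) *: (k1 + 2 *: k2 + 2 *: k3 + k4).

(* Main.v *)
Require Import Defs.
From mathcomp Require Import all_boot all_order all_algebra.
From mathcomp Require Import all_classical all_reals all_analysis.
From mathcomp Require Import ring lra.
Import Order.TTheory GRing.Theory Num.Theory.
Local Open Scope ring_scope.

Lemma enorm_ge0 (R : realType) n (v : 'rV[R]_n) : 0 <= enorm v.
Proof. by rewrite /enorm sqrtr_ge0. Qed.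

Lemma enorm_sq (R : realType) n (v : 'rV[R]_n) :
  enorm v ^+ 2 = \sum_(i < n) (v ord0 i) ^+ 2.
Proof.
rewrite /enorm sqr_sqrtr //; apply: sumr_ge0 => i _; exact: sqr_ge0.
Qed.

Lemma enorm_diff {R : realType} {n} (u v : 'rV[R]_n) (c : R) :
  enorm u <= c -> enorm v <= c -> enorm (u - v) <= 2 * c.
Proof.
move=> hu hv.
have c0 : 0 <= c by apply: le_trans hu; exact: enorm_ge0.
have hs : enorm (u - v) ^+ 2 <= (2 * c) ^+ 2.
  rewrite enorm_sq.
  apply: (@le_trans _ _ (2 * enorm u ^+ 2 + 2 * enorm v ^+ 2)).
    rewrite !enorm_sq !mulr_sumr -big_split /=.
    apply: ler_sum => i _; rewrite !mxE.
    have := sqr_ge0 (u ord0 i + v ord0 i); nra.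
  have h1 : enorm u ^+ 2 <= c ^+ 2 by rewrite ler_sqr ?nnegrE ?enorm_ge0.
  have h2 : enorm v ^+ 2 <= c ^+ 2 by rewrite ler_sqr ?nnegrE ?enorm_ge0.
  nra.
by rewrite -ler_sqr ?nnegrE ?enorm_ge0 // mulr_ge0.
Qed.

Theorem theorem5 (R : realType) (n : nat) (f : 'rV[R]_n -> 'rV[R]_n)
    (dt L M r0 k lam : R) (N : nat) :
  f 0 = 0 ->
  0 < dt -> 0 < L -> 0 <= M -> (0 < N)%N ->
  0 < r0 -> 1 <= k -> 0 < lam ->
  let alpha := dt * (1 + L * dt / 2 + (L * dt) ^+ 2 / 6 + (L * dt) ^+ 3 / 24) in
  let Phi := rk4 f dt in
  let phiN := iter N Phi in
  let T := N%:R * dt in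
  let a := (1 + L * alpha) ^+ N in
  let b := \sum_(r < N) (1 + L * alpha) ^+ r * alpha * M in
  (forall x y : 'rV[R]_n,
      enorm (Phi x - Phi y) <= (1 + L * alpha) * enorm (x - y) + alpha * M) ->
  (forall x0 : 'rV[R]_n, enorm x0 <= r0 ->
      enorm (phiN x0) <= k * enorm x0 * expR (- lam * T)) ->
  forall x y : 'rV[R]_n, enorm x <= r0 -> enorm y <= r0 ->
    enorm (phiN x - phiN y) <=
      Num.sqrt (2 * k * r0 * expR (- lam * T) * a * enorm (x - y)
                + 2 * k * r0 * expR (- lam * T) * b).
Proof.
move=> _ dt0 L0 M0 _ r00 k1 lam0 alpha Phi phiN T a b hPhi hexp x y hx hy.
set e := expR (- lam * T).
have e0 : 0 < e by rewrite /e expR_gt0.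
have al0 : 0 < alpha.
  rewrite /alpha mulr_gt0 //.
  have : 0 < L * dt by rewrite mulr_gt0.
  move=> h.
  have h2 : 0 <= (L * dt) ^+ 2 by exact: sqr_ge0.
  have h3 : 0 <= (L * dt) ^+ 3 by rewrite exprn_ge0 // ltW.
  have g1 : 0 < L * dt / 2 by rewrite divr_gt0.
  have g2 : 0 <= (L * dt) ^+ 2 / 6 by rewrite divr_ge0.
  have g3 : 0 <= (L * dt) ^+ 3 / 24 by rewrite divr_ge0.
  lra.
set q := 1 + L * alpha.
have q0 : 0 <= q by rewrite /q; have := mulr_gt0 L0 al0; lra.
have iterb : forall m, enorm (iter m Phi x - iter m Phi y) <=
   q ^+ m * enorm (x - y) + \sum_(r < m) q ^+ r * alpha * M.
  elim=> [|m IH]; first by rewrite big_ord0 expr0 mul1r addr0.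
  rewrite /= (le_trans (hPhi _ _)) // big_ord_recl /= expr0 mul1r.
  have -> : \sum_(i < m) q ^+ (bump 0 i) * alpha * M =
            q * \sum_(i < m) q ^+ i * alpha * M.
    rewrite mulr_sumr; apply: eq_bigr => i _; by rewrite exprS !mulrA.
  rewrite exprS.
  rewrite -/q; have := ler_wpM2l q0 IH; lra.
set c := k * r0 * e.
have hc : forall z, enorm z <= r0 -> enorm (phiN z) <= c.
  move=> z hz; rewrite (le_trans (hexp z hz)) // /c.
  apply: ler_wpM2r; first exact: ltW. apply: ler_wpM2l => //; lra.
have D2 := @enorm_diff _ _ _ _ _ (hc x hx) (hc y hy).
have D1 : enorm (phiN x - phiN y) <= a * enorm (x - y) + b := iterb N.
set D := enorm (phiN x - phiN y) in D1 D2 *.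
have D0 : 0 <= D by exact: enorm_ge0.
have -> : 2 * k * r0 * e * a * enorm (x - y) + 2 * k * r0 * e * b =
          (2 * c) * (a * enorm (x - y) + b) by rewrite /c; ring.
have -> : D = Num.sqrt (D ^+ 2) by rewrite sqrtr_sqr ger0_norm.
have P0 : 0 <= 2 * c * (a * enorm (x - y) + b).
  by apply: mulr_ge0; [exact: (le_trans D0 D2) | exact: (le_trans D0 D1)].
rewrite (ler_sqrt _ P0) expr2.
exact: (ler_pM D0 D0 D2 D1).
Qed.
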